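(* Let $|\mathcal{T}|=2$, $|\mathcal{X}|\ge2$, $|\mathcal{Y}|\ge2$, and let $P\in\Delta_{\mathcal{T},\mathcal{X},\mathcal{Y}}$ be such that $\operatorname{supp}(\Delta_P)=\mathcal{T}\times\mathcal{X}\times\mathcal{Y}$. Let $\tilde Q$ lie in the relative interior of $\Delta_P$ with $\tilde Q\in\arg\max_{Q\in\Delta_P}H_Q(T\mid X,Y)$. Then the maximizer is not unique if either $UI(T:X\setminus Y)=0$ and $|\mathcal{Y}|>2$, or $UI(T:Y\setminus X)=0$ and $|\mathcal{X}|>2$.
   Context: $T,X,Y$ are random variables with finite state spaces $\mathcal{T},\mathcal{X},\mathcal{Y}$; $\Delta_{\mathcal{T},\mathcal{X},\mathcal{Y}}$ is the set of all joint distributions on $\mathcal{T}\times\mathcal{X}\times\mathcal{Y}$. For $P\in\Delta_{\mathcal{T},\mathcal{X},\mathcal{Y}}$, $\Delta_P=\{Q\in\Delta_{\mathcal{T},\mathcal{X},\mathcal{Y}}: Q(X=x,T=t)=P(X=x,T=t),\ Q(Y=y,T=t)=P(Y=y,T=t)\ \forall x,y,t\}$ and $\operatorname{supp}(\Delta_P)=\bigcup_{Q\in\Delta_P}\operatorname{supp}(Q)$. $UI(T:X\setminus Y)=\min_{Q\in\Delta_P}I_Q(T:X\mid Y)$ and $UI(T:Y\setminus X)=\min_{Q\in\Delta_P}I_Q(T:Y\mid X)$; $UI(T:X\setminus Y)=0$ holds iff $T$ is conditionally independent of $X$ given $Y$ under some (any) maximizer. *)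

(* Defs.v *)
From Stdlib Require Import Reals List.
Import ListNotations.
Open Scope R_scope.

(* State spaces: T = {0,1}, X = {0,..,nx-1}, Y = {0,..,ny-1}.
   A joint distribution is a function Q t x y (values outside the range are
   irrelevant and never inspected). *)
Definition jfun := nat -> nat -> nat -> R.

Fixpoint rsum (n : nat) (f : nat -> R) : R :=
  match n with
  | O => 0
  | S k => rsum k f + f k
  end.

Definition nT : nat := 2.

Definition in_dom (nx ny : nat) (t x y : nat) : Prop :=
  (t < nT)%nat /\ (x < nx)%nat /\ (y < ny)%nat.

Definition is_dist (nx ny : nat) (Q : jfun) : Prop :=
  (forall t x y, in_dom nx ny t x y -> 0 <= Q t x y) /\
  rsum nT (fun t => rsum nx (fun x => rsum ny (fun y => Q t x y))) = 1.

Definition mTX (ny : nat) (Q : jfun) (t x : nat) : R := rsum ny (fun y => Q t x y).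
Definition mTY (nx : nat) (Q : jfun) (t y : nat) : R := rsum nx (fun x => Q t x y).
Definition mXY (Q : jfun) (x y : nat) : R := rsum nT (fun t => Q t x y).
Definition mX (ny : nat) (Q : jfun) (x : nat) : R :=
  rsum nT (fun t => rsum ny (fun y => Q t x y)).
Definition mY (nx : nat) (Q : jfun) (y : nat) : R :=
  rsum nT (fun t => rsum nx (fun x => Q t x y)).

Definition DeltaP (nx ny : nat) (P Q : jfun) : Prop :=
  is_dist nx ny Q /\
  (forall t x, (t < nT)%nat -> (x < nx)%nat -> mTX ny Q t x = mTX ny P t x) /\
  (forall t y, (t < nT)%nat -> (y < ny)%nat -> mTY nx Q t y = mTY nx P t y).

(* supp(Delta_P) = T x X x Y *)
Definition full_supp (nx ny : nat) (P : jfun) : Prop :=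
  forall t x y, in_dom nx ny t x y -> exists Q, DeltaP nx ny P Q /\ 0 < Q t x y.

(* convention 0 * log(...) = 0 *)
Definition plog (a r : R) : R :=
  if Rle_dec a 0 then 0 else a * ln r.

Definition sum3 (nx ny : nat) (f : nat -> nat -> nat -> R) : R :=
  rsum nT (fun t => rsum nx (fun x => rsum ny (fun y => f t x y))).

Definition condH (nx ny : nat) (Q : jfun) : R :=
  - sum3 nx ny (fun t x y => plog (Q t x y) (Q t x y / mXY Q x y)).

Definition CMI_TX_Y (nx ny : nat) (Q : jfun) : R :=
  sum3 nx ny (fun t x y =>
    plog (Q t x y) (Q t x y * mY nx Q y / (mTY nx Q t y * mXY Q x y))).

Definition CMI_TY_X (nx ny : nat) (Q : jfun) : R :=
  sum3 nx ny (fun t x y =>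
    plog (Q t x y) (Q t x y * mX ny Q x / (mTX ny Q t x * mXY Q x y))).

Definition is_min_over (nx ny : nat) (P : jfun) (f : jfun -> R) (u : R) : Prop :=
  (exists Q, DeltaP nx ny P Q /\ f Q = u) /\
  (forall Q, DeltaP nx ny P Q -> u <= f Q).

Definition UI_X_minus_Y (nx ny : nat) (P : jfun) (u : R) : Prop :=
  is_min_over nx ny P (CMI_TX_Y nx ny) u.
Definition UI_Y_minus_X (nx ny : nat) (P : jfun) (u : R) : Prop :=
  is_min_over nx ny P (CMI_TY_X nx ny) u.

Definition in_aff_DeltaP (nx ny : nat) (P R0 : jfun) : Prop :=
  exists l : list (R * jfun),
    (forall p, In p l -> DeltaP nx ny P (snd p)) /\
    fold_right (fun p s => fst p + s) 0 l = 1 /\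
    (forall t x y, in_dom nx ny t x y ->
       R0 t x y = fold_right (fun p s => fst p * snd p t x y + s) 0 l).

Definition in_relint_DeltaP (nx ny : nat) (P Q : jfun) : Prop :=
  DeltaP nx ny P Q /\
  exists eps, 0 < eps /\
    forall R0, in_aff_DeltaP nx ny P R0 ->
      (forall t x y, in_dom nx ny t x y -> Rabs (R0 t x y - Q t x y) < eps) ->
      DeltaP nx ny P R0.

Definition is_argmax_condH (nx ny : nat) (P Q : jfun) : Prop :=
  DeltaP nx ny P Q /\ forall Q', DeltaP nx ny P Q' -> condH nx ny Q' <= condH nx ny Q.

(* Main.v *)
Require Import Defs.
From Stdlib Require Import Reals Lra Lia List FunctionalExtensionality.
Import ListNotations.
Open Scope R_scope.

Lemma ln_div' x y : 0 < x -> 0 < y -> ln (x / y) = ln x - ln y.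
Proof. intros. unfold Rdiv. rewrite ln_mult, ln_Rinv; try lra. apply Rinv_0_lt_compat; lra. Qed.

Lemma rsum_ext n f g : (forall k, (k < n)%nat -> f k = g k) -> rsum n f = rsum n g.
Proof. induction n; simpl; intros H; [reflexivity|]. rewrite IHn by (intros; apply H; lia). rewrite H by lia. reflexivity. Qed.

Lemma rsum_plus n f g : rsum n (fun k => f k + g k) = rsum n f + rsum n g.
Proof. induction n; simpl; [lra|]. rewrite IHn; lra. Qed.

Lemma rsum_minus n f g : rsum n (fun k => f k - g k) = rsum n f - rsum n g.
Proof. induction n; simpl; [lra|]. rewrite IHn; lra. Qed.

Lemma rsum_scal n c f : rsum n (fun k => c * f k) = c * rsum n f.
Proof. induction n; simpl; [lra|]. rewrite IHn; ring. Qed.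

Lemma rsum_scalr n c f : rsum n (fun k => f k * c) = rsum n f * c.
Proof. induction n; simpl; [lra|]. rewrite IHn; ring. Qed.

Lemma rsum_0 n : rsum n (fun _ => 0) = 0.
Proof. induction n; simpl; [lra|]. rewrite IHn; ring. Qed.

Lemma rsum_swap n m f : rsum n (fun i => rsum m (fun j => f i j)) = rsum m (fun j => rsum n (fun i => f i j)).
Proof. induction n; simpl. - symmetry; apply rsum_0. - rewrite IHn, <- rsum_plus. reflexivity. Qed.

Lemma rsum_nonneg n f : (forall k, (k<n)%nat -> 0 <= f k) -> 0 <= rsum n f.
Proof. induction n; simpl; intros H; [lra|]. pose proof (IHn (fun k Hk => H k ltac:(lia))). pose proof (H n ltac:(lia)). lra. Qed.

Lemma rsum_le_term n f k : (forall i, (i<n)%nat -> 0 <= f i) -> (k<n)%nat -> f k <= rsum n f.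
Proof. induction n; intros H Hk; [lia|]. simpl. destruct (Nat.eq_dec k n).
- subst. pose proof (rsum_nonneg n f (fun i Hi => H i ltac:(lia))). lra.
- pose proof (IHn (fun i Hi => H i ltac:(lia)) ltac:(lia)). pose proof (H n ltac:(lia)). lra. Qed.

Lemma rsum_zero_nonneg n f : (forall i, (i<n)%nat -> 0<=f i) -> rsum n f = 0 -> forall k, (k<n)%nat -> f k = 0.
Proof. induction n; intros H Hs k Hk; [lia|]. simpl in Hs.
pose proof (rsum_nonneg n f (fun i Hi => H i ltac:(lia))). pose proof (H n ltac:(lia)).
destruct (Nat.eq_dec k n). subst; lra. apply IHn; try lra; try lia. intros; apply H; lia. Qed.

Lemma rsum_trunc3 n f : (3 <= n)%nat -> (forall k, (3 <= k)%nat -> f k = 0) -> rsum n f = f 0%nat + f 1%nat + f 2%nat.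
Proof. induction n; intros Hn Hf; [lia|]. destruct (Nat.eq_dec n 2). subst; simpl; ring.
simpl; rewrite IHn by (auto; lia). rewrite (Hf n) by lia; ring. Qed.

Definition uu (x : nat) : R := match x with 0%nat => 1 | 1%nat => -1 | _ => 0 end.

Lemma rsum_uu n : (2 <= n)%nat -> rsum n uu = 0.
Proof. induction n; intros Hn; [lia|]. destruct (Nat.eq_dec n 1). subst; simpl; ring.
simpl; rewrite IHn by lia. destruct n as [|[|n]]; try lia. simpl; ring. Qed.

Lemma sum3_ext nx ny f g : (forall t x y, in_dom nx ny t x y -> f t x y = g t x y) -> sum3 nx ny f = sum3 nx ny g.
Proof. intros H. unfold sum3. apply rsum_ext; intros t Ht. apply rsum_ext; intros x Hx. apply rsum_ext; intros y Hy.
apply H. unfold in_dom, nT in *. auto. Qed.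

Lemma sum3_minus nx ny f g : sum3 nx ny f - sum3 nx ny g = sum3 nx ny (fun t x y => f t x y - g t x y).
Proof. unfold sum3. rewrite <- rsum_minus. apply rsum_ext; intros. rewrite <- rsum_minus. apply rsum_ext; intros.
rewrite <- rsum_minus. reflexivity. Qed.

Lemma sum3_plus nx ny f g : sum3 nx ny f + sum3 nx ny g = sum3 nx ny (fun t x y => f t x y + g t x y).
Proof. unfold sum3. rewrite <- rsum_plus. apply rsum_ext; intros. rewrite <- rsum_plus. apply rsum_ext; intros.
rewrite <- rsum_plus. reflexivity. Qed.

Lemma sum3_0 nx ny : sum3 nx ny (fun _ _ _ => 0) = 0.
Proof. unfold sum3. rewrite (rsum_ext _ _ (fun _ => 0)). apply rsum_0. intros. rewrite (rsum_ext _ _ (fun _ => 0)). apply rsum_0.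
intros. apply rsum_0. Qed.

Lemma sum3_swap nx ny f : rsum nT (fun t => rsum nx (fun x => rsum ny (fun y => f t x y))) = rsum nT (fun t => rsum ny (fun y => rsum nx (fun x => f t x y))).
Proof. apply rsum_ext; intros. apply rsum_swap. Qed.

Definition nnQ nx ny (Q : jfun) := forall t x y, in_dom nx ny t x y -> 0 <= Q t x y.

Lemma sum3_zero nx ny f : nnQ nx ny f -> sum3 nx ny f = 0 -> forall t x y, in_dom nx ny t x y -> f t x y = 0.
Proof. intros H Hs t x y Hd. unfold in_dom, nT in *. unfold nnQ, in_dom, nT in H. unfold sum3, nT in Hs.
destruct Hd as (Ht&Hx&Hy).
eapply (rsum_zero_nonneg ny); [intros; apply H; auto| |auto].
eapply (rsum_zero_nonneg nx (fun x => rsum ny (fun y => f t x y))); [intros; apply rsum_nonneg; intros; apply H; auto| |auto].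
eapply (rsum_zero_nonneg 2 (fun t => rsum nx (fun x => rsum ny (fun y => f t x y)))); [|exact Hs|auto].
intros; apply rsum_nonneg; intros; apply rsum_nonneg; intros; apply H; auto. Qed.

Section Marg.
Variables (nx ny : nat) (Q : jfun).
Hypothesis HQ : nnQ nx ny Q.

Lemma le_mTY t x y : in_dom nx ny t x y -> Q t x y <= mTY nx Q t y.
Proof. intros (Ht&Hx&Hy). unfold mTY. apply (rsum_le_term nx (fun x => Q t x y)); auto. intros; apply HQ; repeat split; auto. Qed.

Lemma le_mTX t x y : in_dom nx ny t x y -> Q t x y <= mTX ny Q t x.
Proof. intros (Ht&Hx&Hy). unfold mTX. apply (rsum_le_term ny (fun y => Q t x y)); auto. intros; apply HQ; repeat split; auto. Qed.

Lemma le_mXY t x y : in_dom nx ny t x y -> Q t x y <= mXY Q x y.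
Proof. intros (Ht&Hx&Hy). unfold mXY. apply (rsum_le_term nT (fun t => Q t x y)); auto. intros; apply HQ; repeat split; auto. Qed.

Lemma mY_split y : mY nx Q y = mTY nx Q 0 y + mTY nx Q 1 y.
Proof. unfold mY, mTY, nT. simpl. ring. Qed.

Lemma le_mY t x y : in_dom nx ny t x y -> Q t x y <= mY nx Q y.
Proof. intros Hd. pose proof (le_mTY t x y Hd). rewrite mY_split. destruct Hd as (Ht&Hx&Hy).
assert (0 <= mTY nx Q 0 y /\ 0 <= mTY nx Q 1 y) as [].
{ unfold mTY; split; apply rsum_nonneg; intros; apply HQ; repeat split; unfold nT; auto. }
unfold nT in Ht. destruct t as [|[|t]]; try lia; lra. Qed.

Lemma le_one t x y : sum3 nx ny Q = 1 -> in_dom nx ny t x y -> Q t x y <= 1.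
Proof. intros Hs Hd. pose proof (le_mTX t x y Hd). rewrite <- Hs. destruct Hd as (Ht&Hx&Hy).
eapply Rle_trans; [exact H|]. unfold sum3, mTX.
eapply Rle_trans; [apply (rsum_le_term nx (fun x => rsum ny (fun y => Q t x y)))|]; auto.
intros; apply rsum_nonneg; intros; apply HQ; repeat split; auto.
apply (rsum_le_term nT (fun t => rsum nx (fun x => rsum ny (fun y => Q t x y)))); auto.
intros; apply rsum_nonneg; intros; apply rsum_nonneg; intros; apply HQ; repeat split; auto. Qed.
End Marg.

Lemma term_id q a b c : 0 <= q -> (0 < q -> 0 < a /\ 0 < b /\ 0 < c) ->
  plog q (q*a/(b*c)) - plog q (q/c) = q * ln (a/b).
Proof. intros Hq Hp. unfold plog. destruct (Rle_dec q 0). assert (q = 0) by lra; subst; ring.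
destruct (Hp ltac:(lra)) as (Ha&Hb&Hc).
rewrite !ln_div', ln_mult, ln_mult; try lra; try (apply Rmult_lt_0_compat; lra). Qed.

Lemma DeltaP_nonneg nx ny P Q : DeltaP nx ny P Q -> nnQ nx ny Q.
Proof. intros [[H _] _]. exact H. Qed.

Lemma condH_CMI nx ny Q : nnQ nx ny Q ->
  condH nx ny Q + CMI_TX_Y nx ny Q =
  rsum nT (fun t => rsum ny (fun y => mTY nx Q t y * ln (mY nx Q y / mTY nx Q t y))).
Proof. intros HQ. unfold condH.
replace (- sum3 nx ny (fun t x y => plog (Q t x y) (Q t x y / mXY Q x y)) + CMI_TX_Y nx ny Q) with
  (CMI_TX_Y nx ny Q - sum3 nx ny (fun t x y => plog (Q t x y) (Q t x y / mXY Q x y))) by ring.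
unfold CMI_TX_Y. rewrite sum3_minus.
rewrite (sum3_ext _ _ _ (fun t x y => Q t x y * ln (mY nx Q y / mTY nx Q t y))).
- unfold sum3. rewrite sum3_swap. apply rsum_ext; intros t Ht; apply rsum_ext; intros y Hy.
  rewrite rsum_scalr. reflexivity.
- intros t x y Hd. apply term_id. apply HQ; auto. intros Hp.
  pose proof (le_mY nx ny Q HQ t x y Hd). pose proof (le_mTY nx ny Q HQ t x y Hd).
  pose proof (le_mXY nx ny Q HQ t x y Hd). repeat split; lra. Qed.

Definition KP nx ny P := rsum nT (fun t => rsum ny (fun y => mTY nx P t y * ln (mY nx P y / mTY nx P t y))).

Lemma condH_CMI_P nx ny P Q : DeltaP nx ny P Q -> condH nx ny Q + CMI_TX_Y nx ny Q = KP nx ny P.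
Proof. intros HD. rewrite condH_CMI by (eapply DeltaP_nonneg; eauto). unfold KP.
destruct HD as (_&_&HY).
apply rsum_ext; intros t Ht; apply rsum_ext; intros y Hy.
assert (mY nx Q y = mY nx P y) as ->. { unfold mY. apply rsum_ext; intros t' Ht'. exact (HY t' y Ht' Hy). }
rewrite HY by auto. reflexivity. Qed.

Lemma ln_lt u : 0 < u -> ln u <= u - 1 /\ (u <> 1 -> ln u < u - 1).
Proof. intros Hu. split.
- destruct (Req_dec (ln u) 0). rewrite H. assert (u = 1). { rewrite <- (exp_ln u), H, exp_0; auto. } lra.
  pose proof (exp_ineq1 _ H). rewrite exp_ln in H0; lra.
- intros Hne. assert (ln u <> 0). { intros H. apply Hne. rewrite <- (exp_ln u), H, exp_0; auto. }
  pose proof (exp_ineq1 _ H). rewrite exp_ln in H0; lra. Qed.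

Lemma gibbs q r : 0 < q -> 0 < r -> q - r <= q * ln (q / r) /\ (q * ln (q/r) = q - r -> q = r).
Proof. intros Hq Hr. assert (E : q * ln (q/r) = - (q * ln (r/q))). { rewrite !ln_div'; auto. ring. }
assert (E2 : q * (r/q - 1) = r - q) by (field; lra).
destruct (ln_lt (r/q)) as [H1 H2]. apply Rdiv_lt_0_compat; lra.
split.
- rewrite E. assert (q * ln (r/q) <= q * (r/q - 1)) by (apply Rmult_le_compat_l; lra). lra.
- intros Heq. destruct (Req_dec (r/q) 1).
  + assert (r = q). { apply (Rmult_eq_reg_r (/q)). fold (r/q). rewrite H. field. lra. apply Rinv_neq_0_compat; lra. } lra.
  + specialize (H2 H). assert (q * ln (r/q) < q * (r/q - 1)) by (apply Rmult_lt_compat_l; lra). lra. Qed.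

Lemma factor nx ny Q : (1 <= nx)%nat -> (forall t x y, in_dom nx ny t x y -> 0 < Q t x y) -> is_dist nx ny Q -> CMI_TX_Y nx ny Q = 0 ->
  forall t x y, in_dom nx ny t x y -> Q t x y * mY nx Q y = mTY nx Q t y * mXY Q x y.
Proof. intros Hnx Hp [HQ Hs] HC.
assert (Hpos : forall t x y, in_dom nx ny t x y -> 0 < mY nx Q y /\ 0 < mTY nx Q t y /\ 0 < mXY Q x y).
{ intros t x y Hd. pose proof (Hp t x y Hd). pose proof (le_mY nx ny Q HQ t x y Hd). pose proof (le_mTY nx ny Q HQ t x y Hd).
  pose proof (le_mXY nx ny Q HQ t x y Hd). repeat split; lra. }
set (R := fun t x y => mTY nx Q t y * mXY Q x y / mY nx Q y).
assert (HR : forall t x y, in_dom nx ny t x y -> 0 < R t x y).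
{ intros. destruct (Hpos t x y H) as (?&?&?). unfold R. apply Rdiv_lt_0_compat; auto. apply Rmult_lt_0_compat; auto. }
assert (Hterm : forall t x y, in_dom nx ny t x y -> plog (Q t x y) (Q t x y * mY nx Q y / (mTY nx Q t y * mXY Q x y)) = Q t x y * ln (Q t x y / R t x y)).
{ intros t x y Hd. destruct (Hpos t x y Hd) as (?&?&?). pose proof (Hp t x y Hd). unfold plog. destruct (Rle_dec (Q t x y) 0); [lra|].
  f_equal. f_equal. unfold R. field. repeat split; lra. }
set (e := fun t x y => plog (Q t x y) (Q t x y * mY nx Q y / (mTY nx Q t y * mXY Q x y)) - Q t x y + R t x y).
assert (He : nnQ nx ny e).
{ intros t x y Hd. unfold e. rewrite Hterm by auto. destruct (gibbs (Q t x y) (R t x y)); auto. lra. }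
assert (HsR : sum3 nx ny R = 1).
{ rewrite <- Hs. unfold sum3. rewrite sum3_swap. rewrite (sum3_swap nx ny Q).
  apply rsum_ext; intros t Ht; apply rsum_ext; intros y Hy.
  unfold R. unfold Rdiv. rewrite (rsum_ext _ _ (fun x => mXY Q x y * (mTY nx Q t y * / mY nx Q y))) by (intros; ring).
  rewrite rsum_scalr. assert (rsum nx (fun x => mXY Q x y) = mY nx Q y) as ->.
  { unfold mXY, mY. apply rsum_swap. }
  assert (0 < mY nx Q y). { assert (in_dom nx ny t 0 y). { repeat split; auto. } apply (Hpos _ _ _ H). }
  fold (mTY nx Q t y). field. lra. }
assert (Hse : sum3 nx ny e = 0).
{ unfold e. rewrite <- sum3_plus, <- sum3_minus. fold (CMI_TX_Y nx ny Q). rewrite HC, HsR.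
  unfold sum3 at 1. rewrite Hs. ring. }
intros t x y Hd. pose proof (sum3_zero nx ny e He Hse t x y Hd). unfold e in H. rewrite Hterm in H by auto.
destruct (gibbs (Q t x y) (R t x y)) as [_ G]; auto. assert (Q t x y = R t x y) by (apply G; lra).
rewrite H0. unfold R. destruct (Hpos t x y Hd) as (?&?&?). field. lra. Qed.

Lemma relint_pos nx ny P Qt : full_supp nx ny P -> in_relint_DeltaP nx ny P Qt -> forall t x y, in_dom nx ny t x y -> 0 < Qt t x y.
Proof. intros Hfs [HD [eps [Heps Hrel]]] t x y Hd. destruct (Hfs t x y Hd) as [Q [HQ Hpos]].
set (d := eps/4).
set (R0 := fun t x y => (1+d) * Qt t x y + (-d * Q t x y + 0)).
assert (HR : DeltaP nx ny P R0).
{ apply Hrel.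
  - exists [(1+d, Qt); (-d, Q)]. split; [|split].
    + intros p [<-|[<-|[]]]; simpl; auto.
    + simpl; ring.
    + intros; simpl; reflexivity.
  - intros t' x' y' Hd'. destruct HD as [[HQt HsQt] _]. destruct HQ as [[HQQ HsQ] _].
    pose proof (le_one nx ny Qt HQt t' x' y' HsQt Hd'). pose proof (le_one nx ny Q HQQ t' x' y' HsQ Hd').
    pose proof (HQt _ _ _ Hd'). pose proof (HQQ _ _ _ Hd').
    unfold R0. replace ((1 + d) * Qt t' x' y' + (- d * Q t' x' y' + 0) - Qt t' x' y') with (d * (Qt t' x' y' - Q t' x' y')) by ring.
    unfold d. unfold Rabs; destruct Rcase_abs; nra. }
pose proof (DeltaP_nonneg _ _ _ _ HR t x y Hd). unfold R0 in H.
assert (0 < d) by (unfold d; lra). nra. Qed.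

Lemma vex a0 a1 a2 : exists v0 v1 v2, v0+v1+v2 = 0 /\ a0*v0+a1*v1+a2*v2 = 0 /\ (v0 <> 0 \/ v1 <> 0 \/ v2 <> 0).
Proof. destruct (Req_dec a0 a1).
- exists 1, (-1), 0. subst. repeat split; try ring. left; lra.
- exists (a2-a1), (a0-a2), (a1-a0). repeat split; try ring. right; right; lra. Qed.

Lemma brk M m e w : m <= M -> 0 <= e -> e * Rabs w <= m -> 0 <= M + e*(1*w) /\ 0 <= M + e*(-1*w).
Proof. intros. unfold Rabs in *; destruct Rcase_abs; split; nra. Qed.

Lemma epsb m s a : 0 < m -> 0 <= a -> a <= s -> m / (1+s) * a <= m.
Proof. intros. apply Rle_trans with (m/(1+s)*(1+s)).
apply Rmult_le_compat_l. apply Rlt_le, Rdiv_lt_0_compat; lra. lra. right; field; lra. Qed.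

Ltac rmin_tac := repeat match goal with
  | |- context [Rmin ?a ?b] => let r := fresh "r" in pose proof (Rmin_l a b); pose proof (Rmin_r a b); set (r := Rmin a b) in *; clearbody r
  | H : context [Rmin ?a ?b] |- _ => let r := fresh "r" in pose proof (Rmin_l a b); pose proof (Rmin_r a b); set (r := Rmin a b) in *; clearbody r
  end.

Lemma argmax_of nx ny P Q : UI_X_minus_Y nx ny P 0 -> DeltaP nx ny P Q -> CMI_TX_Y nx ny Q = 0 -> is_argmax_condH nx ny P Q.
Proof. intros [_ Hmin] HD HC. split; auto. intros Q' HD'.
pose proof (condH_CMI_P _ _ _ _ HD). pose proof (condH_CMI_P _ _ _ _ HD'). pose proof (Hmin Q' HD'). lra. Qed.

Lemma mainX nx ny P Qt : (2 <= nx)%nat -> (3 <= ny)%nat -> full_supp nx ny P -> in_relint_DeltaP nx ny P Qt ->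
  is_argmax_condH nx ny P Qt -> UI_X_minus_Y nx ny P 0 ->
  exists Q', is_argmax_condH nx ny P Q' /\ exists t x y, in_dom nx ny t x y /\ Q' t x y <> Qt t x y.
Proof. intros Hnx Hny Hfs Hri Harg HUI.
pose proof (relint_pos _ _ _ _ Hfs Hri) as Hp.
destruct Harg as [HD Hmax].
assert (HC : CMI_TX_Y nx ny Qt = 0).
{ destruct HUI as [[Q0 [HD0 HC0]] Hmin]. pose proof (Hmax Q0 HD0).
  pose proof (condH_CMI_P _ _ _ _ HD). pose proof (condH_CMI_P _ _ _ _ HD0). pose proof (Hmin Qt HD). lra. }
pose proof (factor nx ny Qt ltac:(lia) Hp (proj1 HD) HC) as Hfac.
pose proof (DeltaP_nonneg _ _ _ _ HD) as Hnn.
assert (Hpos : forall t x y, in_dom nx ny t x y -> 0 < mY nx Qt y /\ 0 < mTY nx Qt t y /\ 0 < mXY Qt x y).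
{ intros t x y Hd. pose proof (Hp t x y Hd). pose proof (le_mY nx ny Qt Hnn t x y Hd). pose proof (le_mTY nx ny Qt Hnn t x y Hd).
  pose proof (le_mXY nx ny Qt Hnn t x y Hd). repeat split; lra. }
set (M := fun x y => mXY Qt x y).
set (A := fun t y => mTY nx Qt t y / mY nx Qt y).
destruct (vex (A 0%nat 0%nat) (A 0%nat 1%nat) (A 0%nat 2%nat)) as (v0&v1&v2&Hv1&Hv2&Hv3).
set (v := fun y : nat => match y with 0%nat => v0 | 1%nat => v1 | 2%nat => v2 | _ => 0 end).
set (m0 := Rmin (Rmin (Rmin (M 0%nat 0%nat) (M 0%nat 1%nat)) (Rmin (M 0%nat 2%nat) (M 1%nat 0%nat))) (Rmin (M 1%nat 1%nat) (M 1%nat 2%nat))).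
assert (HM : forall x y, (x < 2)%nat -> (y < 3)%nat -> 0 < M x y /\ m0 <= M x y).
{ intros x y Hx Hy. assert (in_dom nx ny 0 x y) by (repeat split; unfold nT; lia).
  split. apply (Hpos _ _ _ H).
  unfold m0; destruct x as [|[|x]]; destruct y as [|[|[|y]]]; try lia;
  rmin_tac; lra. }
assert (Hm0 : 0 < m0).
{ unfold m0. repeat apply Rmin_glb_lt; match goal with |- 0 < M ?a ?b => apply (proj1 (HM a b ltac:(lia) ltac:(lia))) end. }
set (S := Rabs v0 + Rabs v1 + Rabs v2).
assert (HS : 0 <= S) by (unfold S; pose proof (Rabs_pos v0); pose proof (Rabs_pos v1); pose proof (Rabs_pos v2); lra).
set (eps := m0 / (1 + S)).
assert (Heps : 0 < eps) by (apply Rdiv_lt_0_compat; lra).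
assert (Hev : forall y, (y < 3)%nat -> eps * Rabs (v y) <= m0).
{ intros y Hy. apply epsb; auto. apply Rabs_pos.
  pose proof (Rabs_pos v0); pose proof (Rabs_pos v1); pose proof (Rabs_pos v2).
  destruct y as [|[|[|y]]]; simpl; unfold S; try lra; lia. }
set (Q' := fun t x y => mTY nx Qt t y * (M x y + eps * (uu x * v y)) / mY nx Qt y).
assert (Hbr : forall x y, (x < nx)%nat -> (y < ny)%nat -> 0 <= M x y + eps * (uu x * v y)).
{ intros x y Hx Hy.
  destruct (Nat.lt_ge_cases x 2); destruct (Nat.lt_ge_cases y 3).
  - destruct (HM x y H H0). pose proof (Hev y H0).
    destruct (brk (M x y) m0 eps (v y)); auto; try lra.
    destruct x as [|[|x]]; simpl; try lia; auto.
  - assert (v y = 0) by (destruct y as [|[|[|y]]]; simpl; try lia; auto). rewrite H1.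
    assert (in_dom nx ny 0 x y) by (repeat split; unfold nT; lia). destruct (Hpos _ _ _ H2) as (_&_&?).
    unfold M. lra.
  - assert (uu x = 0) by (destruct x as [|[|x]]; simpl; try lia; auto). rewrite H1.
    assert (in_dom nx ny 0 x y) by (repeat split; unfold nT; lia). destruct (Hpos _ _ _ H2) as (_&_&?).
    unfold M. lra.
  - assert (uu x = 0) by (destruct x as [|[|x]]; simpl; try lia; auto). rewrite H1.
    assert (in_dom nx ny 0 x y) by (repeat split; unfold nT; lia). destruct (Hpos _ _ _ H2) as (_&_&?).
    unfold M. lra. }
assert (HsumM : forall y, rsum nx (fun x => M x y) = mY nx Qt y).
{ intros y. unfold M, mXY, mY. apply rsum_swap. }
assert (HmTY : forall t y, (t < nT)%nat -> (y < ny)%nat -> mTY nx Q' t y = mTY nx Qt t y).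
{ intros t y Ht Hy. assert (in_dom nx ny t 0 y) by (repeat split; auto; lia). destruct (Hpos _ _ _ H) as (?&?&_).
  unfold mTY at 1, Q'.
  rewrite (rsum_ext _ _ (fun x => (mTY nx Qt t y / mY nx Qt y) * (M x y + (eps * v y) * uu x))) by (intros; field; lra).
  rewrite rsum_scal, rsum_plus, rsum_scal, rsum_uu, HsumM by auto. field. lra. }
assert (HAv : forall t, (t < nT)%nat -> rsum ny (fun y => A t y * v y) = 0).
{ intros t Ht. rewrite rsum_trunc3 by (auto; intros k Hk; destruct k as [|[|[|k]]]; simpl; try lia; ring).
  simpl v. unfold nT in Ht. destruct t as [|[|t]]; try lia. lra.
  assert (forall y, (y < 3)%nat -> A 1%nat y = 1 - A 0%nat y).
  { intros y Hy. assert (in_dom nx ny 0 0 y) by (repeat split; unfold nT; lia). destruct (Hpos _ _ _ H) as (?&_).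
    unfold A. rewrite (mY_split nx Qt y). field. rewrite <- (mY_split nx Qt y). lra. }
  rewrite !H by lia. lra. }
assert (HmTX : forall t x, (t < nT)%nat -> (x < nx)%nat -> mTX ny Q' t x = mTX ny Qt t x).
{ intros t x Ht Hx. unfold mTX, Q'.
  rewrite (rsum_ext _ _ (fun y => Qt t x y + (eps * uu x) * (A t y * v y))).
  rewrite rsum_plus, rsum_scal, HAv by auto. rewrite Rmult_0_r, Rplus_0_r; reflexivity.
  intros y Hy. assert (Hd : in_dom nx ny t x y) by (repeat split; auto). destruct (Hpos _ _ _ Hd) as (?&?&?).
  pose proof (Hfac t x y Hd). unfold A, M.
  apply (Rmult_eq_reg_r (mY nx Qt y)); [|lra]. field_simplify; [|lra|lra]. nra. }
assert (HD' : DeltaP nx ny P Q').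
{ destruct HD as [[_ Hs] [HX HY]]. split; [split|split].
  - intros t x y Hd. destruct Hd as (Ht&Hx&Hy). assert (Hd : in_dom nx ny t x y) by (repeat split; auto).
    destruct (Hpos _ _ _ Hd) as (?&?&?). unfold Q'. apply Rmult_le_pos. apply Rmult_le_pos; [lra|apply Hbr; auto].
    left; apply Rinv_0_lt_compat; lra.
  - rewrite <- Hs. apply rsum_ext; intros t Ht; apply rsum_ext; intros x Hx. exact (HmTX t x Ht Hx).
  - intros t x Ht Hx. rewrite <- HX by auto. apply HmTX; auto.
  - intros t y Ht Hy. rewrite <- HY by auto. apply HmTY; auto. }
assert (HC' : CMI_TX_Y nx ny Q' = 0).
{ unfold CMI_TX_Y. rewrite <- (sum3_0 nx ny). apply sum3_ext. intros t x y Hd.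
  unfold plog. destruct (Rle_dec (Q' t x y) 0); [reflexivity|].
  destruct (Hpos _ _ _ Hd) as (?&?&?). destruct Hd as (Ht&Hx&Hy).
  assert (HmY' : mY nx Q' y = mY nx Qt y).
  { unfold mY. apply rsum_ext; intros t' Ht'. exact (HmTY t' y Ht' Hy). }
  assert (HXY : mXY Q' x y = M x y + eps * (uu x * v y)).
  { unfold mXY, Q', nT. simpl. rewrite (mY_split nx Qt y) in *. field. lra. }
  rewrite HmY', HmTY, HXY by auto.
  assert (0 < M x y + eps * (uu x * v y)).
  { destruct (Rle_lt_or_eq_dec _ _ (Hbr x y Hx Hy)); auto. exfalso. apply n. unfold Q'. rewrite <- e. right; field; lra. }
  replace (Q' t x y * mY nx Qt y / (mTY nx Qt t y * (M x y + eps * (uu x * v y)))) with 1.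
  rewrite ln_1; ring. unfold Q'. field. repeat split; lra. }
exists Q'. split. apply argmax_of; auto.
assert (Hj : exists j, (j < 3)%nat /\ v j <> 0).
{ destruct Hv3 as [H|[H|H]]; [exists 0%nat|exists 1%nat|exists 2%nat]; split; auto. }
destruct Hj as [j [Hj Hvj]].
exists 0%nat, 0%nat, j. assert (Hd : in_dom nx ny 0 0 j) by (repeat split; unfold nT; lia). split; auto.
destruct (Hpos _ _ _ Hd) as (?&?&?). pose proof (Hfac _ _ _ Hd).
intros Heq. unfold Q' in Heq. simpl uu in Heq.
assert (mTY nx Qt 0 j * (eps * v j) = 0).
{ assert (E1 : mTY nx Qt 0 j * (M 0%nat j + eps * (1 * v j)) = Qt 0%nat 0%nat j * mY nx Qt j) by (rewrite <- Heq; field; lra).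
  unfold M in E1. nra. }
apply Rmult_integral in H3. destruct H3 as [H3|H3]; [lra|]. apply Rmult_integral in H3; destruct H3; lra. Qed.

Definition sw (Q : jfun) : jfun := fun t x y => Q t y x.

Lemma sw_sw Q : sw (sw Q) = Q.
Proof. unfold sw. apply functional_extensionality; intro t. apply functional_extensionality; intro x.
apply functional_extensionality; intro y. reflexivity. Qed.

Lemma sum3_sw nx ny (f : jfun) : sum3 ny nx (sw f) = sum3 nx ny f.
Proof. unfold sum3, sw. symmetry. apply sum3_swap. Qed.

Lemma DeltaP_sw nx ny P Q : DeltaP nx ny P Q -> DeltaP ny nx (sw P) (sw Q).
Proof. intros [[Hn Hs] [HX HY]]. split; [split|split].
- intros t x y (Ht&Hx&Hy). apply Hn. repeat split; auto.
- rewrite <- Hs. symmetry. apply (sum3_swap nx ny Q).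
- intros t x Ht Hx. exact (HY t x Ht Hx).
- intros t y Ht Hy. exact (HX t y Ht Hy). Qed.

Lemma DeltaP_sw' nx ny P Q : DeltaP ny nx (sw P) Q -> DeltaP nx ny P (sw Q).
Proof. intros H. apply DeltaP_sw in H. rewrite !sw_sw in H. exact H. Qed.

Lemma condH_sw nx ny Q : condH ny nx (sw Q) = condH nx ny Q.
Proof. unfold condH. f_equal. exact (sum3_sw nx ny (fun t x y => plog (Q t x y) (Q t x y / mXY Q x y))). Qed.

Lemma CMI_sw nx ny Q : CMI_TX_Y ny nx (sw Q) = CMI_TY_X nx ny Q.
Proof. unfold CMI_TX_Y, CMI_TY_X. exact (sum3_sw nx ny _). Qed.

Lemma argmax_sw nx ny P Q : is_argmax_condH nx ny P Q -> is_argmax_condH ny nx (sw P) (sw Q).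
Proof. intros [HD Hm]. split. apply DeltaP_sw; auto. intros Q' HD'. apply DeltaP_sw' in HD'.
rewrite condH_sw. rewrite <- (sw_sw Q'), condH_sw. auto. Qed.

Lemma argmax_sw' nx ny P Q : is_argmax_condH ny nx (sw P) Q -> is_argmax_condH nx ny P (sw Q).
Proof. intros H. apply argmax_sw in H. rewrite !sw_sw in H. exact H. Qed.

Lemma fold1 (l : list (R * jfun)) : fold_right (fun p s => fst p + s) 0 (map (fun p => (fst p, sw (snd p))) l) = fold_right (fun p s => fst p + s) 0 l.
Proof. induction l; simpl; auto. rewrite IHl; auto. Qed.

Lemma fold2 (l : list (R * jfun)) t x y : fold_right (fun p s => fst p * snd p t x y + s) 0 (map (fun p => (fst p, sw (snd p))) l) = fold_right (fun p s => fst p * snd p t y x + s) 0 l.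
Proof. induction l; simpl; auto. rewrite IHl; auto. Qed.

Lemma relint_sw nx ny P Q : in_relint_DeltaP nx ny P Q -> in_relint_DeltaP ny nx (sw P) (sw Q).
Proof. intros [HD [eps [He H]]]. split. apply DeltaP_sw; auto. exists eps; split; auto.
intros R0 [l [Hl [Hs Hv]]] Hc. rewrite <- (sw_sw R0). apply DeltaP_sw. apply H.
- exists (map (fun p => (fst p, sw (snd p))) l). split; [|split].
  + intros p Hp. apply in_map_iff in Hp. destruct Hp as [p' [<- Hp']]. simpl. apply DeltaP_sw'. auto.
  + rewrite fold1; auto.
  + intros t x y (Ht&Hx&Hy). rewrite fold2. unfold sw. apply Hv. repeat split; auto.
- intros t x y (Ht&Hx&Hy). apply (Hc t y x). repeat split; auto. Qed.

Lemma fs_sw nx ny P : full_supp nx ny P -> full_supp ny nx (sw P).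
Proof. intros H t x y (Ht&Hx&Hy). destruct (H t y x) as [Q [HQ Hp]]. repeat split; auto.
exists (sw Q). split; auto. apply DeltaP_sw; auto. Qed.

Lemma UI_sw nx ny P : UI_Y_minus_X nx ny P 0 -> UI_X_minus_Y ny nx (sw P) 0.
Proof. intros [[Q [HD HC]] Hm]. split.
- exists (sw Q). split. apply DeltaP_sw; auto. rewrite CMI_sw; auto.
- intros Q' HD'. apply DeltaP_sw' in HD'. rewrite <- (sw_sw Q'), CMI_sw. auto. Qed.

Theorem mainTheorem13 (nx ny : nat) (P Qt : nat -> nat -> nat -> R) :
  (2 <= nx)%nat -> (2 <= ny)%nat ->
  is_dist nx ny P ->
  full_supp nx ny P ->
  in_relint_DeltaP nx ny P Qt ->
  is_argmax_condH nx ny P Qt ->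
  ((UI_X_minus_Y nx ny P 0 /\ (2 < ny)%nat) \/
   (UI_Y_minus_X nx ny P 0 /\ (2 < nx)%nat)) ->
  exists Q', is_argmax_condH nx ny P Q' /\
    exists t x y, in_dom nx ny t x y /\ Q' t x y <> Qt t x y.
Proof. intros Hnx Hny _ Hfs Hri Harg [[HUI Hy]|[HUI Hx]].
- apply mainX; auto.
- destruct (mainX ny nx (sw P) (sw Qt)) as [Q' [HQ' [t [y [x [(Ht&Hy'&Hx') Hne]]]]]]; auto.
  apply fs_sw; auto. apply relint_sw; auto. apply argmax_sw; auto. apply UI_sw; auto.
  exists (sw Q'). split. apply argmax_sw'; auto. exists t, x, y. split. repeat split; auto. exact Hne. Qed.
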